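(* Let $G=(V,E)$ be a $k$-uniform cored hypergraph ($k\ge3$) and let $\mathbf x\in\mathbb R^n$ be an H-eigenvector of its Laplacian tensor $\mathcal L$ corresponding to the H-eigenvalue $\lambda(\mathcal L)$. For each $e\in E$ let $i_e\in e$ be a cored vertex. Then $\prod_{s\in e}x_s\le 0$ for all $e\in E$ when $k$ is even, and $\prod_{s\in e\setminus\{i_e\}}x_s\le0$ for all $e\in E$ when $k$ is odd.
   Context: A $k$-uniform hypergraph $G=(V,E)$ has $V=[n]$ and a nonempty set $E$ of $k$-element subsets of $V$; $d_i$ is the number of edges containing $i$. A cored vertex is a vertex of degree one; $G$ is cored if every edge contains a cored vertex. The Laplacian tensor $\mathcal L=\mathcal D-\mathcal A$ ($\mathcal D$ diagonal with entries $d_i$, $\mathcal A$ with entries $\frac1{(k-1)!}$ at index tuples forming an edge and $0$ otherwise) satisfies $(\mathcal L\mathbf x^{k-1})_i=d_ix_i^{k-1}-\sum_{e\in E,\,i\in e}\prod_{s\in e\setminus\{i\}}x_s$. A real $\lambda$ is an H-eigenvalue with H-eigenvector $\mathbf x\neq0$ if $(\mathcal L\mathbf x^{k-1})_i=\lambda x_i^{k-1}$ for all $i$; $\lambda(\mathcal L)$ is the largest H-eigenvalue. *)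

(* Defs.v *)
From HB Require Import structures.
From mathcomp Require Import all_boot all_order all_algebra.
From mathcomp Require Import reals.
Set Implicit Arguments. Unset Strict Implicit. Unset Printing Implicit Defensive.
Import Order.TTheory GRing.Theory Num.Theory.
Local Open Scope ring_scope.

Definition kuniform (n k : nat) (E : {set {set 'I_n}}) : Prop :=
  E != set0 /\ forall e, e \in E -> #|e| = k.

Definition degree (n : nat) (E : {set {set 'I_n}}) (i : 'I_n) : nat :=
  #|[set e in E | i \in e]|.

Definition cored_vertex (n : nat) (E : {set {set 'I_n}}) (i : 'I_n) : Prop :=
  degree E i = 1%N.

Definition cored (n : nat) (E : {set {set 'I_n}}) : Prop :=
  forall e, e \in E -> exists2 i, i \in e & cored_vertex E i.

(* (L x^{k-1})_i = d_i x_i^{k-1} - sum_{e in E, i in e} prod_{s in e\{i}} x_s *)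
Definition Lx (R : realType) (n k : nat) (E : {set {set 'I_n}})
    (x : 'I_n -> R) (i : 'I_n) : R :=
  (degree E i)%:R * x i ^+ k.-1
  - \sum_(e in E | i \in e) \prod_(s in e :\ i) x s.

Definition is_H_eigenpair (R : realType) (n k : nat) (E : {set {set 'I_n}})
    (lam : R) (x : 'I_n -> R) : Prop :=
  (exists i, x i != 0) /\ forall i, Lx k E x i = lam * x i ^+ k.-1.

Definition is_H_eigenvalue (R : realType) (n k : nat) (E : {set {set 'I_n}})
    (lam : R) : Prop :=
  exists x, is_H_eigenpair k E lam x.

Definition is_largest_H_eigenvalue (R : realType) (n k : nat)
    (E : {set {set 'I_n}}) (lam : R) : Prop :=
  is_H_eigenvalue k E lam /\ forall mu, is_H_eigenvalue k E mu -> mu <= lam.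

(* Main.v *)
Require Import Defs.
From HB Require Import structures.
From mathcomp Require Import all_boot all_order all_algebra.
From mathcomp Require Import reals.
From mathcomp Require Import zify ring lra.
Import Order.TTheory GRing.Theory Num.Theory.
Local Open Scope ring_scope.

Lemma other_vertex (n k : nat) (E : {set {set 'I_n}}) (e : {set 'I_n}) (j a : 'I_n) :
  (3 <= k)%N -> kuniform k E -> e \in E ->
  exists s, (s \in e :\ j) && (s != a).
Proof.
move=> hk [_ hE] he.
have h1 := cardsD1 j e; have h2 := cardsD1 a (e :\ j).
rewrite hE // in h1.
have : (0 < #|(e :\ j) :\ a|)%N.
  have h3 : (k <= 1 + #|e :\ j|)%N by rewrite {1}h1 leq_add2r leq_b1.
  have h4 : (#|e :\ j| <= 1 + #|e :\ j :\ a|)%N by rewrite {1}h2 leq_add2r leq_b1.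
  lia.
case/card_gt0P => s; rewrite !inE => /and3P [sa sj se].
by exists s; rewrite !inE sa sj se.
Qed.

Theorem proposition3p1 (R : realType) (n k : nat) (E : {set {set 'I_n}})
    (lam : R) (x : 'I_n -> R) :
  (3 <= k)%N ->
  kuniform k E ->
  cored E ->
  is_largest_H_eigenvalue k E lam ->
  is_H_eigenpair k E lam x ->
  forall (e : {set 'I_n}) (ie : 'I_n),
    e \in E -> ie \in e -> cored_vertex E ie ->
    (if ~~ odd k then \prod_(s in e) x s <= 0
     else \prod_(s in e :\ ie) x s <= 0).
Proof.
move=> hk hE _ [_ hmax] [_ hx] e ie he hie hc.
pose y : 'I_n -> R := fun j => if j == ie then 1 else 0.
have hlam : 1 <= lam.
  apply: hmax; exists y; split; first by exists ie; rewrite /y eqxx oner_eq0.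
  move=> j; rewrite /Lx.
  have -> : \sum_(e' in E | j \in e') \prod_(s in e' :\ j) y s = 0.
    apply: big1 => e' /andP [he' _].
    have [s /andP [hs hsa]] := @other_vertex _ _ _ _ j ie hk hE he'.
    by rewrite (bigD1 s) //= /y (negbTE hsa) mul0r.
  rewrite subr0 /y; case: eqP => [->|_].
    by rewrite hc expr1n !mul1r.
  have hk1 : (k.-1 == 0)%N = false by apply/eqP; lia.
  by rewrite expr0n hk1 !mulr0.
have S1 : [set e' in E | ie \in e'] = [set e].
  apply/eqP; rewrite eq_sym eqEcard sub1set inE he hie /= cards1.
  by move: hc; rewrite /cored_vertex /degree => ->.
have hP : \prod_(s in e :\ ie) x s = (1 - lam) * x ie ^+ k.-1.
  have := hx ie; rewrite /Lx hc mul1r.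
  have -> : \sum_(e' in E | ie \in e') \prod_(s in e' :\ ie) x s
           = \sum_(e' in [set e' in E | ie \in e']) \prod_(s in e' :\ ie) x s.
    by apply: eq_bigl => e'; rewrite inE.
  rewrite S1 big_set1 => h.
  rewrite mulrBl mul1r -h; lra.
have hl : 1 - lam <= 0 by lra.
have hk0 : k.-1.+1 = k by apply: prednK; lia.
have hD : \prod_(s in e | s != ie) x s = \prod_(s in e :\ ie) x s.
  by apply: eq_bigl => s; rewrite !inE andbC.
case: ifP => hodd.
  rewrite (bigD1 ie) //= hD hP mulrA (mulrC (x ie)) -mulrA -exprS hk0.
  by apply: mulr_le0_ge0 => //; apply: exprn_even_ge0.
rewrite hP; apply: mulr_le0_ge0 => //; apply: exprn_even_ge0.
by rewrite -oddS hk0; apply/negbFE.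
Qed.
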